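(* Let $r\in\mathbb{N}$. Every bounded Borel measurable sigmoidal function $\sigma:\mathbb{R}\to\mathbb{R}$ is discriminatory (for $r$). In particular, every continuous sigmoidal function is discriminatory.
   Context: A function $\sigma:\mathbb{R}\to\mathbb{R}$ is sigmoidal if $\sigma(t)\to1$ as $t\to+\infty$ and $\sigma(t)\to0$ as $t\to-\infty$. For a nonempty compact $X\subset\mathbb{R}^r$, $M(X)$ is the set of regular signed Borel measures on $X$ (finite signed measures whose positive and negative variations are regular Borel measures). $\sigma$ is discriminatory (for $r$) if for every nonempty compact $X\subset\mathbb{R}^r$ and every $\mu\in M(X)$: if $\int_X\sigma(m^{\mathrm T}x+k)\,d\mu(x)=0$ for all $m\in\mathbb{Z}^r$, $k\in\mathbb{Z}$, then $\mu=0$. *)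

(* Defs.v *)
From HB Require Import structures.
From mathcomp Require Import all_boot all_order all_algebra.
From mathcomp Require Import all_classical all_reals all_analysis.
Set Implicit Arguments. Unset Strict Implicit. Unset Printing Implicit Defensive.
Import Order.TTheory GRing.Theory Num.Theory.
Import numFieldNormedType.Exports.
Local Open Scope classical_set_scope.
Local Open Scope ring_scope.

Definition borelRn (R : realType) (r : nat) :=
  g_sigma_algebraType (@open 'rV[R]_r).

Definition sigmoidal (R : realType) (sigma : R -> R) : Prop :=
  (sigma x @[x --> +oo] --> (1 : R)) /\ (sigma x @[x --> -oo] --> (0 : R)).

Definition zdot (R : realType) (r : nat) (m : 'rV[int]_r) (x : 'rV[R]_r) : R :=
  \sum_(i < r) (m ord0 i)%:~R * x ord0 i.

Definition regular_measure (R : realType) (r : nat)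
    (mu : {finite_measure set (borelRn R r) -> \bar R}) : Prop :=
  forall A : set (borelRn R r), measurable A ->
    mu A = ereal_inf [set mu U | U in [set U : set 'rV[R]_r | open U /\ A `<=` U]]
    /\ mu A = ereal_sup [set mu K | K in [set K : set 'rV[R]_r | compact K /\ K `<=` A]].

(* A regular signed Borel measure on the compact set X is represented as
   mu = mu1 - mu2 with mu1, mu2 finite regular Borel measures on R^r
   concentrated on X (a Jordan-type decomposition).  Then
   int_X f dmu = int_X f dmu1 - int_X f dmu2, and mu = 0 iff mu1 A = mu2 A
   for every Borel A. *)
Definition discriminatory (R : realType) (r : nat) (sigma : R -> R) : Prop :=
  forall (X : set 'rV[R]_r), X !=set0 -> compact X ->
  forall (mu1 mu2 : {finite_measure set (borelRn R r) -> \bar R}),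
    regular_measure mu1 -> regular_measure mu2 ->
    mu1 (~` X) = 0%E -> mu2 (~` X) = 0%E ->
    (forall (m : 'rV[int]_r) (k : int),
       (\int[mu1]_(x in X) (sigma (zdot m x + k%:~R))%:E =
        \int[mu2]_(x in X) (sigma (zdot m x + k%:~R))%:E)%E) ->
    forall A : set (borelRn R r), measurable A -> mu1 A = mu2 A.

(* Main.v *)
Require Import Defs.
From HB Require Import structures.
From mathcomp Require Import all_boot all_order all_algebra.
From mathcomp Require Import all_classical all_reals all_analysis.
From mathcomp Require Import measurable_realfun.
From mathcomp Require Import ring lra.
Import Order.TTheory GRing.Theory Num.Theory.
Import numFieldNormedType.Exports.
Local Open Scope classical_set_scope.
Local Open Scope ring_scope.
Section step.
Variable R : realType.
Implicit Types (y h q c u : R).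

Lemma bern_lb y N : 0 <= y <= 1 -> 1 - N%:R * y <= (1 - y) ^+ N.
Proof.
move=> /andP[y0 y1]; elim: N => [|N IH]; first by rewrite expr0 mul0r subr0.
rewrite exprS -natr1.
have h1 : 0 <= 1 - y by lra.
have := ler_wpM2l h1 IH.
have : 0 <= N%:R * y * y by rewrite mulr_ge0 // mulr_ge0.
lra.
Qed.

Lemma bern_lb2 y N : 0 <= y -> 1 + N%:R * y <= (1 + y) ^+ N.
Proof.
move=> y0; elim: N => [|N IH]; first by rewrite expr0 mul0r addr0.
rewrite exprS -natr1.
have h1 : 0 <= 1 + y by lra.
have := ler_wpM2l h1 IH.
have : 0 <= N%:R * y * y by rewrite mulr_ge0 // mulr_ge0.
lra.
Qed.

Lemma bern_ub y N : 0 <= y <= 1 -> (1 - y) ^+ N * (1 + N%:R * y) <= 1.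
Proof.
move=> /andP[y0 y1].
have h1 : 0 <= (1 - y) ^+ N by apply: exprn_ge0; lra.
apply: le_trans (ler_wpM2l h1 (bern_lb2 y N y0)) _.
rewrite -exprMn; apply: exprn_ile1; nra.
Qed.

Lemma pow_lb (h : R) n : 0 <= h ->
  n%:R * (n%:R - 1) / 2 * h ^+ 2 <= (1 + h) ^+ n.
Proof.
move=> h0.
suff : 1 + n%:R * h + n%:R * (n%:R - 1) / 2 * h ^+ 2 <= (1 + h) ^+ n.
  have : 0 <= n%:R * h :> R by rewrite mulr_ge0.
  lra.
elim: n => [|n IH]; first by rewrite expr0 !mul0r; lra.
rewrite exprS -natr1.
have h1 : 0 <= 1 + h by lra.
have := ler_wpM2l h1 IH.
have n0 : 0 <= n%:R :> R by [].
have nn1 : 0 <= n%:R * (n%:R - 1) :> R.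
  by case: n {IH n0} => [|n]; rewrite ?mul0r // -natr1 addrK mulr_ge0.
have : 0 <= n%:R * (n%:R - 1) / 2 * h ^+ 3 :> R.
  by apply: mulr_ge0; rewrite ?exprn_ge0 // divr_ge0.
rewrite !expr2 !exprS expr0 mulr1; lra.
Qed.

Lemma nq_cvg0 (q : R) : 0 <= q < 1 -> (fun n => n%:R * q ^+ n) @ \oo --> 0.
Proof.
move=> /andP[q0 q1].
have [->|qn0] := eqVneq q 0.
  apply: cvg_near_cst; near=> n.
  have n1 : (0 < n)%N by near: n; exists 1%N.
  by rewrite expr0n gtn_eqF // mulr0.
have qp : 0 < q by rewrite lt_def qn0 q0.
pose h := q^-1 - 1.
have hp : 0 < h by rewrite /h subr_gt0 invf_gt1.
have qh : q * (1 + h) = 1 by rewrite /h addrC subrK mulfV.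
apply/cvgr0Pnorm_le => e e0.
near=> n.
rewrite ger0_norm ?mulr_ge0 ?exprn_ge0 //.
have Hn := pow_lb h n (ltW hp).
have qhn : q ^+ n * (1 + h) ^+ n = 1 by rewrite -exprMn qh expr1n.
have hh : 0 < h ^+ 2 by rewrite exprn_gt0.
have n2 : 2 / (e * h ^+ 2) + 2 <= n%:R.
  by near: n; apply: nbhs_infty_ger; rewrite num_real.
have e2 : 0 < e * h ^+ 2 by rewrite mulr_gt0.
have key : 2 <= e * h ^+ 2 * (n%:R - 1).
  rewrite -ler_pdivrMl //; lra.
(* n q^n = n / (1+h)^n <= n / (n(n-1)/2 h^2) = 2/((n-1) h^2) <= e *)
have qn0' : 0 <= q ^+ n by rewrite exprn_ge0.
set P := (1 + h) ^+ n in Hn qhn.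
set Q := q ^+ n in qhn qn0' *.
have nn : 0 <= n%:R :> R by [].
have A : Q * (n%:R * (n%:R - 1) / 2 * h ^+ 2) <= 1.
  by apply: le_trans (ler_wpM2l qn0' Hn) _; rewrite qhn.
have a0 : 0 < (n%:R - 1) * h ^+ 2.
  apply: mulr_gt0 => //.
  have : 0 <= 2 / (e * h ^+ 2) by rewrite divr_ge0 // ltW.
  lra.
rewrite -(ler_pM2r a0).
have -> : n%:R * Q * ((n%:R - 1) * h ^+ 2) =
   2 * (Q * (n%:R * (n%:R - 1) / 2 * h ^+ 2)) by field.
have : e * h ^+ 2 * (n%:R - 1) = e * ((n%:R - 1) * h ^+ 2) by ring.
lra.
Unshelve. all: by end_near. Qed.

Definition st (c : R) (K : nat) (n : nat) (u : R) : R :=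
  (1 - (u / (c * K%:R)) ^+ n) ^+ (n * K ^ n).

Lemma st_y (c : R) (K : nat) n u : 0 < c -> (0 < K)%N ->
  (n * K ^ n)%:R * (u / (c * K%:R)) ^+ n = n%:R * (u / c) ^+ n.
Proof.
move=> c0 K0; rewrite natrM natrX -mulrA; congr (_ * _).
rewrite -exprMn; congr (_ ^+ _).
have K0' : K%:R != 0 :> R by rewrite pnatr_eq0 -lt0n.
have c0' : c != 0 by rewrite gt_eqF.
by field; rewrite K0' c0'.
Qed.

Lemma st_bnd (c : R) (K : nat) n u : 0 < c -> (0 < K)%N ->
  0 <= u <= c * K%:R -> 0 <= st c K n u <= 1.
Proof.
move=> c0 K0 /andP[u0 uK].
have cK : 0 < c * K%:R by rewrite mulr_gt0 // ltr0n.
have y01 : 0 <= (u / (c * K%:R)) ^+ n <= 1.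
  apply/andP; split; first by rewrite exprn_ge0 // divr_ge0 // ltW.
  by apply: exprn_ile1; [rewrite divr_ge0 // ltW | rewrite ler_pdivrMr // mul1r].
rewrite /st; apply/andP; split; first by apply: exprn_ge0; lra.
by apply: exprn_ile1; lra.
Qed.

Lemma st_cvg1 (c : R) (K : nat) u : 0 < c -> (0 < K)%N -> 0 <= u < c ->
  st c K n u @[n --> \oo] --> (1 : R).
Proof.
move=> c0 K0 /andP[u0 uc].
have Kge1 : 1 <= K%:R :> R by rewrite ler1n.
have ucK : u <= c * K%:R by nra.
have uu : 0 <= u <= c * K%:R by rewrite u0 ucK.
apply: (@squeeze_cvgr _ _ _ _ (fun n => 1 - n%:R * (u / c) ^+ n) (fun=> 1)).
- near=> n; apply/andP; split; last by have /andP[] := st_bnd _ _ n _ c0 K0 uu.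
  rewrite -(st_y _ _ _ _ c0 K0); apply: bern_lb.
  have cK : 0 < c * K%:R by rewrite mulr_gt0 // ltr0n.
  apply/andP; split; first by rewrite exprn_ge0 // divr_ge0 // ltW.
  by apply: exprn_ile1; [rewrite divr_ge0 // ltW | rewrite ler_pdivrMr // mul1r].
- rewrite -[X in _ --> X]subr0; apply: cvgB; first exact: cvg_cst.
  apply: nq_cvg0; apply/andP; split; [by rewrite divr_ge0 // ltW | by rewrite ltr_pdivrMr // mul1r].
- exact: cvg_cst.
Unshelve. all: by end_near. Qed.

Lemma st_cvg0 (c : R) (K : nat) u : 0 < c -> (0 < K)%N -> c <= u <= c * K%:R ->
  st c K n u @[n --> \oo] --> (0 : R).
Proof.
move=> c0 K0 /andP[cu ucK].
have u0 : 0 <= u by lra.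
have uu : 0 <= u <= c * K%:R by rewrite u0 ucK.
have cK : 0 < c * K%:R by rewrite mulr_gt0 // ltr0n.
apply: (@squeeze_cvgr _ _ _ _ (fun=> 0) (fun n => harmonic n)).
- near=> n; apply/andP; split; first by have /andP[] := st_bnd _ _ n _ c0 K0 uu.
  have y01 : 0 <= (u / (c * K%:R)) ^+ n <= 1.
    apply/andP; split; first by rewrite exprn_ge0 // divr_ge0 // ltW.
    by apply: exprn_ile1; [rewrite divr_ge0 // ltW | rewrite ler_pdivrMr // mul1r].
  have := bern_ub _ (n * K ^ n) y01; rewrite (st_y _ _ _ _ c0 K0) -/(st c K n u).
  have h1 : 1 <= (u / c) ^+ n by apply: exprn_ege1; rewrite ler_pdivlMr // mul1r.
  have h2 : n%:R <= n%:R * (u / c) ^+ n :> R by rewrite ler_peMr.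
  move=> H.
  rewrite /harmonic /= -natr1.
  have s0 : 0 <= st c K n u by have /andP[] := st_bnd _ _ n _ c0 K0 uu.
  rewrite -[X in _ <= X]mul1r ler_pdivlMr ?ltr_wpDl //.
  have : st c K n u * (n%:R + 1) <= st c K n u * (1 + n%:R * (u / c) ^+ n).
    by apply: ler_wpM2l => //; lra.
  lra.
- exact: cvg_cst.
- exact: cvg_harmonic.
Unshelve. all: by end_near. Qed.

End step.
Arguments st {R}.
Arguments st_bnd {R}.
Arguments st_cvg1 {R}.
Arguments st_cvg0 {R}.
Section main.
Variables (R : realType) (r : nat).
Notation V := 'rV[R]_r.
Notation T := (borelRn R r).

Lemma cont_meas (f : V -> R) : continuous f -> measurable_fun [set: T] (f : T -> R).
Proof.
move=> cf; apply: (measurability _ (measurable_realfun.RGenOInfty.measurableE R)).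
move=> _ [_ [c ->] <-]; apply: sub_sigma_algebra; rewrite setTI.
apply: open_comp; first by move=> x _; exact: cf.
exact: rray_open.
Qed.

Lemma meas_coord i : measurable_fun [set: T] (fun x : T => (x : V) ord0 i).
Proof. exact: cont_meas (@coord_continuous R 1 r ord0 i). Qed.

Lemma meas_zdot m : measurable_fun [set: T] (zdot m : T -> R).
Proof.
rewrite /zdot; apply: measurable_sum => i.
apply: measurable_realfun.measurable_funM; [exact: measurable_cst | exact: meas_coord].
Qed.

Lemma zdotD m1 m2 (x : V) : zdot (m1 + m2) x = zdot m1 x + zdot m2 x.
Proof.
rewrite /zdot -big_split /=; apply: eq_bigr => i _.
by rewrite mxE intrD mulrDl.
Qed.

Lemma zdot0 (x : V) : zdot 0 x = 0.
Proof. by rewrite /zdot big1 // => i _; rewrite mxE mul0r. Qed.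

Lemma zdotZ (a : int) m (x : V) : zdot (a *: m) x = a%:~R * zdot m x.
Proof.
rewrite /zdot mulr_sumr; apply: eq_bigr => i _.
by rewrite mxE intrM mulrA.
Qed.

Definition ei (i : 'I_r) (z : int) : 'rV[int]_r := \row_j (if j == i then z else 0).

Lemma zdot_ei i z (x : V) : zdot (ei i z) x = z%:~R * x ord0 i.
Proof.
rewrite /zdot (bigD1 i) //= big1 ?addr0; first by rewrite mxE eqxx.
by move=> j /negbTE ji; rewrite mxE ji mul0r.
Qed.

Definition EP (f : V -> R) := exists s : seq ('rV[int]_r * R),
  forall x, f x = \sum_(p <- s) p.2 * expR (zdot p.1 x).

Lemma EP_mul f g : EP f -> EP g -> EP (fun x => f x * g x).
Proof.
move=> [s fs] [t gt]; exists [seq (p.1 + q.1, p.2 * q.2) | p <- s, q <- t].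
move=> x; rewrite fs gt big_allpairs_dep /= mulr_suml; apply: eq_bigr => p _.
rewrite mulr_sumr; apply: eq_bigr => q _ /=.
rewrite zdotD expRD; ring.
Qed.

Lemma EP_add f g : EP f -> EP g -> EP (fun x => f x + g x).
Proof.
move=> [s fs] [t gt]; exists (s ++ t) => x.
by rewrite fs gt big_cat.
Qed.

Lemma EP_scale a f : EP f -> EP (fun x => a * f x).
Proof.
move=> [s fs]; exists [seq (p.1, a * p.2) | p <- s] => x.
rewrite fs big_map mulr_sumr; apply: eq_bigr => p _ /=; ring.
Qed.

Lemma EP_cst a : EP (fun=> a).
Proof.
exists [:: (0, a)] => x; rewrite big_seq1 /= zdot0 expR0 mulr1 //.
Qed.

Lemma EP_poly (P : {poly R}) i (z : int) : EP (fun x => P.[expR (z%:~R * x ord0 i)]).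
Proof.
exists [seq (ei i (z * j%:Z), P`_j) | j <- iota 0 (size P)] => x.
rewrite horner_coef big_map -(big_mkord xpredT (fun j => P`_j * _ ^+ j)).
rewrite /index_iota subn0; apply: eq_bigr => j _ /=.
by rewrite zdot_ei intrM -expRM_natl; congr (_ * expR _); rewrite -pmulrn; ring.
Qed.


Section meas.
Variables (X : set V) (cX : compact X).

Lemma mX : measurable (X : set T).
Proof.
have clX : closed X := compact_closed (@norm_hausdorff R V) cX.
rewrite -[X]setCK; apply: measurableC; apply: sub_sigma_algebra.
by rewrite openC.
Qed.

Lemma muX (mu : {measure set T -> \bar R}) : mu (~` X) = 0%E ->
  forall A : set T, measurable A -> mu A = mu (A `&` X).
Proof.
move=> h A mA; rewrite (measureDI mu mA mX) -[RHS]add0e; congr (_ + _)%E.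
apply: (subset_measure0 (measurableD mA mX) (measurableC mX)) => //.
Qed.

Lemma intXT (mu : {measure set T -> \bar R}) (f : T -> \bar R) :
  mu (~` X) = 0%E -> measurable_fun [set: T] f ->
  (\int[mu]_(x in X) f x = \int[mu]_x f x)%E.
Proof.
move=> h mf.
rewrite -(setUv X) integral_setU //.
- by rewrite (null_set_integral (measurableC mX)
    (measurable_funS measurableT (@subsetT _ _) mf) h) adde0.
- exact: mX.
- exact: measurableC mX.
- by rewrite setUv.
- by rewrite disj_set2E setICr.
Qed.

Variables (mu1 mu2 : {finite_measure set T -> \bar R}).
Hypotheses (h1 : mu1 (~` X) = 0%E) (h2 : mu2 (~` X) = 0%E).

Section sig.
Variable sigma : R -> R.
Hypothesis sM : exists M : R, forall t, `|sigma t| <= M.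
Hypothesis ms : measurable_fun [set: R] sigma.
Hypothesis ss : sigmoidal sigma.
Hypothesis hsig : forall (m : 'rV[int]_r) (k : int),
  (\int[mu1]_(x in X) (sigma (zdot m x + k%:~R))%:E =
   \int[mu2]_(x in X) (sigma (zdot m x + k%:~R))%:E)%E.

Definition aa (m : 'rV[int]_r) (c : R) (n : nat) (x : V) : R :=
  zdot (((n * n)%N)%:Z *: m) x + (- (n%:Z * (Num.floor (c * n%:R) + 2)))%:~R.

Lemma aaE m c n x : aa m c n x =
  n%:R * (n%:R * zdot m x - ((Num.floor (c * n%:R))%:~R + 2)).
Proof.
rewrite /aa zdotZ intrN intrM intrD -!pmulrn natrM.
by rewrite natrD; ring.
Qed.

Lemma aa_cvg m c x : (sigma (aa m c n x))%:E @[n --> \oo] -->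
   (\1_(zdot m @^-1` `]c, +oo[ : set V) x)%:E.
Proof.
apply: cvg_EFin; first exact: nearW.
case: ss => sP sN.
set s := zdot m x.
have [sc|sc] := ltrP c s.
- have -> : \1_(zdot m @^-1` `]c, +oo[ : set V) x = 1 :> R.
    by rewrite indicE mem_set //= in_itv /= andbT.
  apply: (cvg_comp _ _ _ sP).
  apply/cvgryPge => A; near=> n.
  rewrite aaE -/s.
  have f1 := floor_le (c * n%:R).
  have n1 : `|A| <= n%:R by near: n; apply: nbhs_infty_ger; rewrite num_real.
  have n2 : 3 / (s - c) <= n%:R by near: n; apply: nbhs_infty_ger; rewrite num_real.
  have sc0 : 0 < s - c by rewrite subr_gt0.
  have n3 : 3 <= n%:R * (s - c) by rewrite -ler_pdivrMr.
  have : A <= `|A| := ler_norm A.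
  have n0 : 0 <= n%:R :> R by [].
  set F := (Num.floor (c * n%:R))%:~R in f1 *.
  have i1 : 1 <= n%:R * s - (F + 2) by lra.
  have : n%:R <= n%:R * (n%:R * s - (F + 2)) by rewrite ler_peMr.
  lra.
- have -> : \1_(zdot m @^-1` `]c, +oo[ : set V) x = 0 :> R.
    by rewrite indicE memNset //= in_itv /= andbT; apply/negP; rewrite -leNgt.
  apply: (cvg_comp _ _ _ sN).
  apply/cvgrNyPle => A; near=> n.
  rewrite aaE -/s.
  have f1 := floorD1_gt (c * n%:R).
  have n1 : `|A| <= n%:R by near: n; apply: nbhs_infty_ger; rewrite num_real.
  have : - `|A| <= A by rewrite lerNl ler_normr lexx orbT.
  have n0 : 0 <= n%:R :> R by [].
  rewrite intrD in f1.
  set F := (Num.floor (c * n%:R))%:~R in f1 *.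
  have i1 : n%:R * s - (F + 2) <= -1.
    have : n%:R * s <= n%:R * c by rewrite ler_wpM2l.
    lra.
  have : n%:R * (n%:R * s - (F + 2)) <= - n%:R.
    by rewrite -mulrN1 ler_wpM2l.
  lra.
Unshelve. all: by end_near. Qed.

Lemma halfspace_eq m c :
  mu1 (zdot m @^-1` `]c, +oo[ : set T) = mu2 (zdot m @^-1` `]c, +oo[ : set T).
Proof.
have [M hM] := sM.
set S := (zdot m @^-1` `]c, +oo[ : set T).
have mS : measurable S.
  by rewrite -[S]setTI; apply: meas_zdot => //; exact: measurable_itv.
have key (mu : {finite_measure set T -> \bar R}) :
    (\int[mu]_(x in X) (sigma (aa m c n x))%:E)%E @[n --> \oo] --> mu (S `&` X).
  rewrite -integral_indic //; last exact: mX.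
  apply: (@dominated_cvg _ _ _ mu _ mX _ _ (fun=> M%:E)).
  - move=> n; apply/measurable_EFinP; apply: measurable_funS (measurableT) _ _ => //.
    apply: measurableT_comp => //; rewrite /aa.
    apply: measurable_funD; first exact: meas_zdot.
    exact: measurable_cst.
  - by move=> x _; apply: aa_cvg.
  - by [].
  - exact: finite_measure_integrable_cst mX.
  - by move=> n x _; rewrite lee_fin.
rewrite (muX _ h1 _ mS) (muX _ h2 _ mS).
have k1 := key mu1; have k2 := key mu2.
have E : (fun n => \int[mu1]_(x in X) (sigma (aa m c n x))%:E)%E =
          (fun n => \int[mu2]_(x in X) (sigma (aa m c n x))%:E)%E.
  by apply: funext => n; rewrite /aa hsig.
rewrite E in k1.
exact: (cvg_unique _ k1 k2).
Qed.

End sig.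
Section expeq.
Hypothesis hh : forall m c,
  mu1 (zdot m @^-1` `]c, +oo[ : set T) = mu2 (zdot m @^-1` `]c, +oo[ : set T).

Lemma push_eq m (A : set R) : measurable A ->
  pushforward mu1 (zdot m : T -> R) A = pushforward mu2 (zdot m : T -> R) A.
Proof.
have mz := meas_zdot m.
pose g k : set R := `](- k%:R), +oo[%classic.
apply: (@measure_unique _ R _ (RGenOInfty.G (R:=R)) g
  (RGenOInfty.measurableE R) _ _ _ (pushforward mu1 (zdot m : T -> R))
  (pushforward mu2 (zdot m : T -> R))).
- move=> _ _ [x ->] [y ->]; exists (Num.max x y).
  apply/seteqP; split => z /=.
  + by move=> []; rewrite /= !in_itv /= !andbT gt_max => -> ->.
  + by rewrite /= in_itv /= andbT gt_max => /andP[xz yz]; split;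
      rewrite /= in_itv /= andbT.
- by move=> k; exists (- k%:R).
- apply/seteqP; split => // z _.
  exists (Num.trunc `|z|).+1 => //=; rewrite /g /= in_itv /= andbT.
  rewrite ltrNl; apply: le_lt_trans (truncnS_gt _).
  by rewrite ler_normr lexx orbT.
- by move=> _ [c ->]; apply: hh.
- move=> k; rewrite /pushforward ltey_eq fin_num_measure //.
  by rewrite -[_ @^-1` _]setTI; apply: mz => //; exact: measurable_itv.
Qed.

Lemma exp_eq m :
  (\int[mu1]_(x in X) (expR (zdot m x))%:E = \int[mu2]_(x in X) (expR (zdot m x))%:E)%E.
Proof.
have mz := meas_zdot m.
have mf : measurable_fun [set: T] (fun x : T => (expR (zdot m x))%:E).
  by apply/measurable_EFinP; apply: measurableT_comp => //; exact: measurable_expR.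
rewrite (intXT _ _ h1 mf) (intXT _ _ h2 mf).
have mg : measurable_fun [set: R] (fun y : R => (expR y)%:E).
  by apply/measurable_EFinP; exact: measurable_expR.
have := @ge0_integral_pushforward _ _ _ _ R _ mz mu1 setT _ measurableT mg.
rewrite preimage_setT => <-; last by move=> y _; rewrite lee_fin expR_ge0.
have := @ge0_integral_pushforward _ _ _ _ R _ mz mu2 setT _ measurableT mg.
rewrite preimage_setT => <-; last by move=> y _; rewrite lee_fin expR_ge0.
apply: eq_measure_integral => A mA _.
by first [exact: push_eq | exact/esym/push_eq].
Qed.

End expeq.
Section goodsec.
Lemma Xbound : exists L : R, 0 <= L /\ forall x, X x -> forall i, `|x ord0 i| <= L.
Proof.
have := compact_bounded cX; rewrite /bounded_near => -[M0 [_ HM]].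
exists (`|M0| + 1); split; first by rewrite addr_ge0.
move=> x Xx i.
have := HM (`|M0| + 1) _ x Xx; rewrite /=.
have : `|M0| < `|M0| + 1 by rewrite ltrDl.
have : M0 <= `|M0| := ler_norm M0.
move=> a b; have ab : M0 < `|M0| + 1 by apply: le_lt_trans a b.
move=> /(_ ab) H; apply: le_trans H.
have -> : `|x| = mx_norm x by [].
rewrite mx_normrE.
exact: (@le_bigmax _ _ _ 0 (fun ij => `|x ij.1 ij.2|) (ord0, i)).
Qed.

Lemma zdot_bound m : exists B : R, forall x, X x -> `|zdot m x| <= B.
Proof.
have [L [L0 HL]] := Xbound.
exists (\sum_(i < r) `|(m ord0 i)%:~R| * L) => x Xx.
rewrite /zdot; apply: le_trans (ler_norm_sum _ _ _) _.
apply: ler_sum => i _; rewrite normrM; apply: ler_wpM2l => //.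
exact: HL.
Qed.

Lemma bnd_int (mu : {finite_measure set T -> \bar R}) (f : T -> R) B :
  measurable_fun [set: T] f -> (forall x, X x -> `|f x| <= B) ->
  mu.-integrable X (EFin \o f).
Proof.
move=> mf fB.
apply: le_integrable (finite_measure_integrable_cst mu B mX).
- exact: mX.
- by apply/measurable_EFinP; exact: measurable_funS mf.
- move=> x Xx /=; rewrite lee_fin.
  by apply: le_trans (fB x Xx) _; exact: ler_norm.
Qed.

Lemma meas_expz m : measurable_fun [set: T] (fun x : T => expR (zdot m x)).
Proof. by apply: measurableT_comp; [exact: measurable_expR | exact: meas_zdot]. Qed.

Lemma meas_EP f : EP f -> measurable_fun [set: T] (f : T -> R).
Proof.
move=> [s fs].
have -> : (f : T -> R) = (fun x => \sum_(p <- s) p.2 * expR (zdot p.1 x)).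
  by apply: funext => x; rewrite fs.
apply: measurable_sum => p.
apply: measurable_realfun.measurable_funM; [exact: measurable_cst | exact: meas_expz].
Qed.

Hypothesis hh : forall m c,
  mu1 (zdot m @^-1` `]c, +oo[ : set T) = mu2 (zdot m @^-1` `]c, +oo[ : set T).

Lemma EP_int f : EP f ->
  (\int[mu1]_(x in X) (f x)%:E = \int[mu2]_(x in X) (f x)%:E)%E.
Proof.
move=> [s fs].
have ti (mu : {finite_measure set T -> \bar R}) p :
    mu.-integrable X (fun x => (p.2 * expR (zdot p.1 x))%:E).
  have [B hB] := zdot_bound p.1.
  apply: (bnd_int _ (fun x => p.2 * expR (zdot p.1 x)) (`|p.2| * expR B)).
    apply: measurable_realfun.measurable_funM; [exact: measurable_cst | exact: meas_expz].
  move=> x Xx; rewrite normrM; apply: ler_wpM2l => //.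
  rewrite ger0_norm ?expR_ge0 // ler_expR.
  by apply: le_trans (hB x Xx); exact: ler_norm.
have E (mu : {finite_measure set T -> \bar R}) :
   (\int[mu]_(x in X) (f x)%:E =
    \sum_(p <- s) (p.2%:E * \int[mu]_(x in X) (expR (zdot p.1 x))%:E))%E.
  transitivity (\int[mu]_(x in X) (\sum_(p <- s) (p.2 * expR (zdot p.1 x))%:E))%E.
    by apply: eq_integral => x _; rewrite fs sumEFin.
  rewrite integral_sum //; first last.
    by move=> p; exact: ti.
  exact: mX.
  apply: eq_bigr => p _.
  under eq_integral do rewrite EFinM.
  rewrite integralZl //; first exact: mX.
  have [B hB] := zdot_bound p.1.
  apply: (bnd_int _ (fun x => expR (zdot p.1 x)) (expR B)); first exact: meas_expz.
  move=> x Xx; rewrite ger0_norm ?expR_ge0 // ler_expR.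
  by apply: le_trans (hB x Xx); exact: ler_norm.
rewrite !E; apply: eq_bigr => p _; congr (_ * _)%E.
exact: exp_eq.
Qed.

Definition Good (f : V -> R) := exists F : nat -> V -> R,
  [/\ forall n, EP (F n),
      exists2 B, 0 <= B & forall n x, X x -> `|F n x| <= B &
      forall x, X x -> F n x @[n --> \oo] --> f x].

Lemma Good_int f : Good f ->
  (\int[mu1]_(x in X) (f x)%:E = \int[mu2]_(x in X) (f x)%:E)%E.
Proof.
move=> [F [FEP [B B0 FB] Ff]].
have key (mu : {finite_measure set T -> \bar R}) :
    (\int[mu]_(x in X) (F n x)%:E)%E @[n --> \oo] --> (\int[mu]_(x in X) (f x)%:E)%E.
  apply: (@dominated_cvg _ _ _ mu _ mX _ _ (fun=> B%:E)).
  - move=> n; apply/measurable_EFinP; apply: measurable_funS (measurableT) _ _ => //.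
    exact: meas_EP.
  - move=> x Xx; apply: cvg_EFin; first exact: nearW.
    exact: Ff.
  - by [].
  - exact: finite_measure_integrable_cst mX.
  - by move=> n x Xx; rewrite lee_fin; apply: FB.
have k1 := key mu1; have k2 := key mu2.
have E : (fun n => \int[mu1]_(x in X) (F n x)%:E)%E =
         (fun n => \int[mu2]_(x in X) (F n x)%:E)%E.
  by apply: funext => n; apply: EP_int.
rewrite E in k1.
exact: (cvg_unique _ k1 k2).
Qed.

Lemma Good_ext f g : Good f -> (forall x, X x -> f x = g x) -> Good g.
Proof.
move=> [F [FEP FB Ff]] fg; exists F; split => // x Xx.
by rewrite -fg //; apply: Ff.
Qed.

Lemma Good_cst a : Good (fun=> a).
Proof.
exists (fun _ _ => a); split => //.
- by move=> n; exact: EP_cst.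
- by exists `|a| => //.
- by move=> x _; exact: cvg_cst.
Qed.

Lemma Good_mul f g : Good f -> Good g -> Good (fun x => f x * g x).
Proof.
move=> [F [FEP [B B0 FB] Ff]] [G [GEP [C C0 GB] Gg]].
exists (fun n x => F n x * G n x); split.
- by move=> n; apply: EP_mul.
- exists (B * C); first exact: mulr_ge0.
  move=> n x Xx; rewrite normrM; apply: ler_pM => //; [exact: FB | exact: GB].
- by move=> x Xx; apply: cvgM; [exact: Ff | exact: Gg].
Qed.

Lemma Good_add f g : Good f -> Good g -> Good (fun x => f x + g x).
Proof.
move=> [F [FEP [B B0 FB] Ff]] [G [GEP [C C0 GB] Gg]].
exists (fun n x => F n x + G n x); split.
- by move=> n; apply: EP_add.
- exists (B + C); first exact: addr_ge0.
  move=> n x Xx; apply: le_trans (ler_normD _ _) _.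
  by apply: lerD; [exact: FB | exact: GB].
- by move=> x Xx; apply: cvgD; [exact: Ff | exact: Gg].
Qed.

Lemma Good_scale a f : Good f -> Good (fun x => a * f x).
Proof. by move=> Gf; apply: Good_mul => //; exact: Good_cst. Qed.

Lemma Good_prod (I : Type) (s : seq I) (g : I -> V -> R) :
  (forall j, Good (g j)) -> Good (fun x => \prod_(j <- s) g j x).
Proof.
move=> Gg; elim: s => [|j s IH].
  by apply: (Good_ext _ _ (Good_cst 1)) => x _; rewrite big_nil.
apply: (Good_ext _ _ (Good_mul _ _ (Gg j) IH)) => x _.
by rewrite big_cons.
Qed.
Lemma Good_step i (z : int) (a : R) :
  Good (fun x => if z%:~R * x ord0 i < a then 1 else 0).
Proof.
have [L [L0 HL]] := Xbound.
pose L' := `|(z%:~R : R)| * L.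
pose c := expR a.
have c0 : 0 < c by rewrite expR_gt0.
pose K := (Num.trunc (expR L' / c)).+1.
have K0 : (0 < K)%N by [].
have cK : expR L' < c * K%:R.
  by rewrite mulrC -ltr_pdivrMr //; exact: truncnS_gt.
have uB x : X x -> 0 <= expR (z%:~R * x ord0 i) <= c * K%:R.
  move=> Xx; rewrite expR_ge0 /=; apply: ltW; apply: le_lt_trans cK.
  rewrite ler_expR; apply: le_trans (ler_norm _) _.
  by rewrite normrM; apply: ler_wpM2l => //; exact: HL.
exists (fun n x => st c K n (expR (z%:~R * x ord0 i))); split.
- move=> n.
  pose P : {poly R} := (1 - (((c * K%:R)^-1) ^+ n) *: 'X^n) ^+ (n * K ^ n).
  have [s hs] := EP_poly P i z.
  exists s => x; rewrite -hs /P /st !hornerE exprMn mulrC //.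
- exists 1; first by []. move=> n x Xx.
  have /andP[s0 s1] := st_bnd _ _ n _ c0 K0 (uB x Xx).
  by rewrite ger0_norm.
- move=> x Xx.
  have /andP[u0 uK] := uB x Xx.
  case: ifPn => za.
  + apply: st_cvg1 => //; rewrite u0 /= /c ltr_expR //.
  + apply: st_cvg0 => //; rewrite uK andbT /c ler_expR.
    by rewrite leNgt.
Qed.

Lemma ballE (y x : V) e : 0 < e ->
  ball y e x <-> forall i, `|y ord0 i - x ord0 i| < e.
Proof.
move=> e0; split.
- by move=> [_ H] i; have := H ord0 i; rewrite /ball /=.
- move=> H; split => // i j; rewrite (ord1 i); rewrite /ball /=; exact: H.
Qed.

Lemma Good_ball y e : 0 < e -> Good (\1_(ball y e)).
Proof.
move=> e0.
pose g (i : 'I_r) (x : V) : R :=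
  (if 1%:~R * x ord0 i < y ord0 i + e then 1 else 0) *
  (if (-1)%:~R * x ord0 i < - (y ord0 i - e) then 1 else 0).
have Gg i : Good (g i) by apply: Good_mul; apply: Good_step.
apply: (Good_ext _ _ (Good_prod _ (index_enum 'I_r) _ Gg)) => x _.
rewrite indicE.
have gE i : g i x = if `|y ord0 i - x ord0 i| < e then 1 else 0.
  rewrite /g mul1r mulN1r ltrN2 ltr_distlC.
  case: (x ord0 i < y ord0 i + e); case: (y ord0 i - e < x ord0 i);
    by rewrite /= ?mulr1 ?mulr0 ?mul0r ?andbF ?andbT.
case: (pselect (ball y e x)) => bx.
- rewrite mem_set //; apply/esym; rewrite big1 // => i _.
  by rewrite gE ifT //; exact: ((ballE _ _ _ e0).1 bx i).
- rewrite memNset //.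
  have [i Hi] : exists i, ~ (`|y ord0 i - x ord0 i| < e).
    apply/existsNP => H; apply: bx; exact/(ballE _ _ _ e0).
  rewrite (bigD1 i) //= gE.
  by rewrite ifF ?mul0r //; apply/negP.
Qed.

Lemma Good_union (A B : set V) : Good \1_A -> Good \1_B -> Good \1_(A `|` B).
Proof.
move=> GA GB.
have G := Good_add _ _ GA (Good_add _ _ GB (Good_scale (-1) _ (Good_mul _ _ GA GB))).
apply: (Good_ext _ _ G) => x _.
rewrite !indicE in_setU.
by case: (x \in A); case: (x \in B); rewrite /=; ring.
Qed.

Definition Wset (s : seq V) (e : V -> R) : set V :=
  [set x | exists2 y, y \in s & ball y (e y) x].

Lemma Good_W s e : (forall y, 0 < e y) -> Good \1_(Wset s e).
Proof.
move=> e0; elim: s => [|y s IH].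
  apply: (Good_ext _ _ (Good_cst 0)) => x _.
  by rewrite indicE memNset // => -[z].
have -> : Wset (y :: s) e = ball y (e y) `|` Wset s e.
  apply/seteqP; split => x /=.
  - move=> [z]; rewrite in_cons => /orP[/eqP -> bx|zs bx]; first by left.
    by right; exists z.
  - move=> [bx|[z zs bx]]; first by exists y => //; rewrite mem_head.
    by exists z => //; rewrite in_cons zs orbT.
exact: (Good_union _ _ (Good_ball _ _ (e0 y)) IH).
Qed.

Lemma open_W s e : open (Wset s e).
Proof.
rewrite openE => x [y ys bx].
have := ball_open y (e y); rewrite openE => /(_ x bx) H.
by apply: filterS H => z bz; exists y.
Qed.

Lemma W_eq s e : (forall y, 0 < e y) -> mu1 (Wset s e) = mu2 (Wset s e).
Proof.
move=> e0.
have mW : measurable (Wset s e : set T) by apply: sub_sigma_algebra; exact: open_W.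
rewrite (muX _ h1 _ mW) (muX _ h2 _ mW).
rewrite -(integral_indic _ mX mW) -(integral_indic _ mX mW).
exact: (Good_int _ (Good_W s e e0)).
Qed.
End goodsec.
Lemma mK (K : set V) : compact K -> measurable (K : set T).
Proof.
move=> cK; have clK : closed K := compact_closed (@norm_hausdorff R V) cK.
rewrite -[K]setCK; apply: measurableC; apply: sub_sigma_algebra.
by rewrite openC.
Qed.

Lemma open_le_gen (mu nu : {finite_measure set T -> \bar R}) :
  regular_measure mu ->
  (forall s e, (forall y, 0 < e y) -> mu (Wset s e) = nu (Wset s e)) ->
  forall U : set V, open U -> (mu U <= nu U)%E.
Proof.
move=> reg HW U oU.
have mU : measurable (U : set T) by apply: sub_sigma_algebra.
rewrite (reg U mU).2.
apply: ge_ereal_sup => _ [K [cK KU] <-].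
have He : forall y : V, exists e : R, 0 < e /\ (U y -> ball y e `<=` U).
  move=> y; case: (pselect (U y)) => Uy; last by exists 1; split.
  have : nbhs y U by apply: open_nbhs_nbhs; split.
  move=> /nbhs_ballP [e e0 H]; exists e; split => //.
have [e he] := choice He.
have e0 y : 0 < e y by case: (he y).
have mKK := mK _ cK.
move: (cK); rewrite compact_cover => cK'.
have cov : K `<=` cover K (fun y => ball y (e y)).
  by move=> x Kx; exists x => //; exact: ballxx.
have [D' D'K KD'] := cK' V K (fun y => ball y (e y)) (fun y _ => ball_open y (e y)) cov.
have KW : K `<=` Wset (finmap.enum_fset D') e.
  move=> x /KD' [y /= yD bx]; exists y => //.
have WU : Wset (finmap.enum_fset D') e `<=` U.
  move=> x [y yD bx]; have Ky : K y by apply/set_mem; apply: D'K.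
  exact: ((he y).2 (KU y Ky) x bx).
have mW : measurable (Wset (finmap.enum_fset D') e : set T) by apply: sub_sigma_algebra; exact: open_W.
apply: (@le_trans _ _ (mu (Wset (finmap.enum_fset D') e))).
  by rewrite le_measure ?inE.
rewrite (HW _ _ e0).
by rewrite le_measure ?inE.
Qed.
Lemma final_eq (reg1 : regular_measure mu1) (reg2 : regular_measure mu2)
  (hh : forall m c,
    mu1 (zdot m @^-1` `]c, +oo[ : set T) = mu2 (zdot m @^-1` `]c, +oo[ : set T)) :
  forall A : set T, measurable A -> mu1 A = mu2 A.
Proof.
have HW12 s e (e0 : forall y, 0 < e y) : mu1 (Wset s e) = mu2 (Wset s e).
  exact: W_eq.
have HW21 s e (e0 : forall y, 0 < e y) : mu2 (Wset s e) = mu1 (Wset s e).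
  by rewrite HW12.
have Uo (U : set T) : open (U : set V) -> mu1 U = mu2 U.
  move=> oU; apply/eqP; rewrite eq_le.
  by rewrite (open_le_gen _ _ reg1 HW12 _ oU) (open_le_gen _ _ reg2 HW21 _ oU).
move=> A mA.
apply: (@g_sigma_algebra_measure_unique _ R T (@open V) _ (fun=> setT)) => //.
- by move=> U oU; apply: sub_sigma_algebra.
- by move=> _; exact: openT.
- by rewrite bigcup_const.
- exact: openI.
- by move=> _; rewrite ltey_eq fin_num_measure.
Qed.
End meas. End main.
Lemma cont_bounded (R : realType) (sigma : R -> R) :
  continuous sigma -> sigmoidal sigma -> exists M : R, forall t, `|sigma t| <= M.
Proof.
move=> cs [sP sN].
have n12 : `|1 : R| < 2 by rewrite normr1 ltr1n.
have n01 : `|0 : R| < 1 by rewrite normr0 ltr01.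
have [A1 [_ HA1]] := cvgr_norm_le _ sP 2 n12.
have [A2 [_ HA2]] := cvgr_norm_le _ sN 1 n01.
have ab : Num.min A2 A1 <= A1 by rewrite ge_min lexx orbT.
have cf : {within `[Num.min A2 A1, A1], continuous (fun t => `|sigma t|)}.
  apply: continuous_subspaceT => t.
  exact: (continuous_comp (cs t) (@norm_continuous _ R^o (sigma t))).
have [c _ Hc] := EVT_max ab cf.
exists (2 + `|sigma c|) => t.
have s0 : 0 <= `|sigma c| by [].
have [h|h] := ltrP A1 t.
  by have := HA1 t h => /= H; lra.
have [h'|h'] := ltrP t A2.
  by have := HA2 t h' => /= H; lra.
have : `|sigma t| <= `|sigma c|.
  apply: Hc; rewrite in_itv /= h andbT ge_min.
  by rewrite h'.
lra.
Qed.

Theorem lemma4p2p4 (R : realType) (r : nat) :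
  (forall sigma : R -> R,
     (exists M : R, forall t, `|sigma t| <= M) ->
     measurable_fun [set: R] sigma ->
     sigmoidal sigma -> discriminatory r sigma) /\
  (forall sigma : R -> R,
     continuous sigma -> sigmoidal sigma -> discriminatory r sigma).
Proof.
have part1 : forall sigma : R -> R,
     (exists M : R, forall t, `|sigma t| <= M) ->
     measurable_fun [set: R] sigma ->
     sigmoidal sigma -> discriminatory r sigma.
  move=> sigma sM ms ss X _ cX mu1 mu2 reg1 reg2 h1 h2 hsig A mA.
  have hh := halfspace_eq _ _ _ cX _ _ h1 h2 _ sM ms ss hsig.
  exact: (final_eq _ _ _ cX _ _ h1 h2 reg1 reg2 hh _ mA).
split => // sigma cs ss.
apply: part1 => //.
- exact: cont_bounded.
- exact: continuous_measurable_fun.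
Qed.
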